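(* Under the setting of the context, assume (TS1) and let $u$ be the solution of problem (P). Let $x\in\mu_x\mathbb{N}$ and suppose $u(x-\mu_x,t)\ge0$ for all $t\in\mathbb{T}$ and $u(x-\mu_x,t)>0$ for at least one $t\in\mathbb{T}$. Then $u(x,t)\ge0$ for all $t\in\mathbb{T}$.
   Context: A time scale $\mathbb{T}$ is a nonempty closed subset of $\mathbb{R}$; here $\min\mathbb{T}=0$ and $\sup\mathbb{T}=+\infty$. $\sigma(t)=\inf\{s\in\mathbb{T}:s>t\}$ is the forward jump and $\mu_t(t)=\sigma(t)-t$ the graininess; $u^{\Delta_t}$ denotes the (Hilger) delta derivative in $t$. Fix $A>0$, $k>0$, $\mu_x>0$, $\Omega=\mu_x\mathbb{Z}\times\mathbb{T}$, $\mu_x\mathbb{N}=\{\mu_x,2\mu_x,\dots\}$. Problem (P): $u^{\Delta_t}(x,t)+k\frac{u(x,t)-u(x-\mu_x,t)}{\mu_x}=0$ for $(x,t)\in\Omega$, $u(0,0)=A$, $u(x,0)=0$ for $x\ne0$. A solution is $u:\Omega\to\mathbb{R}$ with each $u(x,\cdot)$ delta differentiable on $\mathbb{T}$, satisfying (P), and bounded on $\mu_x\mathbb{Z}\times(\mathbb{T}\cap[0,T_0])$ for every $T_0>0$. Condition (TS1): $1-\frac{k\mu_t(t)}{\mu_x}>0$ for all $t\in\mathbb{T}$. *)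

(* Defs.v *)
From Stdlib Require Import Reals Lra Lia ZArith ClassicalEpsilon.
Open Scope R_scope.

Definition closed_set (T : R -> Prop) : Prop :=
  forall x, (forall eps, eps > 0 -> exists t, T t /\ Rabs (t - x) < eps) -> T x.

Definition is_time_scale0 (T : R -> Prop) : Prop :=
  closed_set T /\ T 0 /\ (forall t, T t -> 0 <= t) /\
  (forall M, exists t, T t /\ t > M).

Definition is_inf_after (T : R -> Prop) (t s : R) : Prop :=
  (forall r, T r -> r > t -> s <= r) /\
  (forall b, (forall r, T r -> r > t -> b <= r) -> b <= s).

Definition sigma (T : R -> Prop) (t : R) : R :=
  epsilon (inhabits 0) (fun s => is_inf_after T t s).

Definition graininess (T : R -> Prop) (t : R) : R := sigma T t - t.

Definition delta_deriv (T : R -> Prop) (f : R -> R) (t d : R) : Prop :=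
  forall eps, eps > 0 -> exists delta, delta > 0 /\
    forall s, T s -> Rabs (s - t) < delta ->
      Rabs (f (sigma T t) - f s - d * (sigma T t - s)) <= eps * Rabs (sigma T t - s).

(* Solution of (P). The spatial grid mu_x Z is indexed by n : Z (x = n * mu_x);
   u n t stands for u(n mu_x, t). *)
Definition is_solution_P (T : R -> Prop) (A k mux : R) (u : Z -> R -> R) : Prop :=
  (exists ud : Z -> R -> R,
     forall n t, T t ->
       delta_deriv T (u n) t (ud n t) /\
       ud n t + k * (u n t - u (n - 1)%Z t) / mux = 0) /\
  u 0%Z 0 = A /\
  (forall n, n <> 0%Z -> u n 0 = 0) /\
  (forall T0, T0 > 0 -> exists M, forall n t, T t -> t <= T0 -> Rabs (u n t) <= M).

Definition TS1 (T : R -> Prop) (k mux : R) : Prop :=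
  forall t, T t -> 1 - k * graininess T t / mux > 0.

(* Main.v *)
Require Import Defs.
From Stdlib Require Import Reals ZArith.
From Stdlib Require Import Lra Lia Classical ClassicalEpsilon.
Open Scope R_scope.

Lemma Rabs_split (x y : R) : Rabs x <= y -> -y <= x /\ x <= y.
Proof. unfold Rabs; destruct (Rcase_abs x); intros; lra. Qed.

Lemma sigma_eq (T : R -> Prop) t s : is_inf_after T t s -> Defs.sigma T t = s.
Proof.
  intros H. unfold Defs.sigma.
  assert (Hs : is_inf_after T t (epsilon (inhabits 0) (fun s => is_inf_after T t s))).
  { apply epsilon_spec. exists s; exact H. }
  destruct H as [H1 H2]; destruct Hs as [H3 H4].
  apply Rle_antisym; [apply H2 | apply H4]; assumption.
Qed.

Lemma zero_of_small (X K : R) : 0 <= K -> (forall eps, eps > 0 -> Rabs X <= eps * K) -> X = 0.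
Proof.
  intros HK H. destruct (Req_dec X 0) as [|hX]; auto.
  assert (hp : Rabs X > 0) by (apply Rabs_pos_lt; auto).
  specialize (H (Rabs X / (K + 1))).
  assert (Rabs X / (K+1) > 0) by (apply Rdiv_lt_0_compat; lra).
  specialize (H H0).
  assert (Rabs X / (K + 1) * K < Rabs X).
  { unfold Rdiv. rewrite Rmult_assoc, (Rmult_comm (/ (K+1))).
    assert (K * / (K+1) < 1).
    { apply (Rmult_lt_reg_r (K+1)); [lra|]. rewrite Rmult_assoc, Rinv_l; lra. }
    nra. }
  lra.
Qed.

Section Key.
Variables (T : R -> Prop) (a : R) (w v ud : R -> R).
Hypothesis HT : is_time_scale0 T.
Hypothesis ha : a > 0.
Hypothesis TS : forall t, T t -> 1 - a * graininess T t > 0.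
Hypothesis Hd : forall t, T t -> delta_deriv T w t (ud t).
Hypothesis He : forall t, T t -> ud t = a * (v t - w t).
Hypothesis Hv : forall t, T t -> v t >= 0.
Hypothesis H0 : w 0 = 0.

Lemma key e : e > 0 -> forall t, T t -> w t + e * (1 + t) >= 0.
Proof.
  intros he t0 Ht0.
  destruct HT as [Hcl [HT0 [Hpos Hunb]]].
  destruct (Rle_or_lt 0 (w t0 + e * (1 + t0))) as [|Hneg]; [lra|].
  exfalso.
  set (g := fun s => w s + e * (1 + s)).
  set (S := fun s => T s /\ s <= t0 /\ g s < 0).
  set (E := fun y => S (- y)).
  destruct (completeness E) as [m [Hub Hlub]].
  { exists 0. intros y [Ty _]. apply Hpos in Ty. lra. }
  { exists (- t0). unfold E, S, g. rewrite Ropp_involutive. repeat split; auto; lra. }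
  set (c := - m).
  assert (F1 : forall s, S s -> c <= s).
  { intros s Hs. assert (E (- s)) by (unfold E; rewrite Ropp_involutive; auto).
    apply Hub in H. unfold c; lra. }
  assert (F2 : forall r, r > 0 -> exists s, S s /\ s < c + r).
  { intros r hr. apply NNPP. intros Hn.
    assert (m <= m - r).
    { apply Hlub. intros y Hy. destruct (Rle_or_lt y (m - r)); auto.
      exfalso; apply Hn. exists (- y). split; auto. unfold c; lra. }
    lra. }
  assert (F3 : T c).
  { apply Hcl. intros eps heps. destruct (F2 eps heps) as [s [Hs Hlt]].
    exists s. split. apply Hs. assert (c <= s) by (apply F1; auto).
    rewrite Rabs_right; lra. }
  assert (F4 : c <= t0) by (apply F1; unfold S; repeat split; auto; lra).
  assert (F5 : forall s, T s -> s < c -> g s >= 0).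
  { intros s Ts hs. destruct (Rle_or_lt 0 (g s)); [lra|].
    assert (c <= s) by (apply F1; unfold S; repeat split; auto; lra). lra. }
  assert (Hc0 : 0 <= c) by (apply Hpos; auto).
  destruct (Rle_or_lt 0 (g c)) as [Hgc | Hgc].
  - (* right-dense *)
    assert (Gt : forall s, S s -> c < s).
    { intros s Hs. assert (c <= s) by (apply F1; auto).
      destruct (Req_dec c s); [|lra]. subst s. destruct Hs as [_ [_ Hs]]. lra. }
    assert (Hsig : Defs.sigma T c = c).
    { apply sigma_eq. split; [intros; lra|].
      intros b Hb. destruct (Rle_or_lt b c); auto.
      destruct (F2 (b - c)) as [s [Hs Hlt]]; [lra|].
      assert (c < s) by (apply Gt; auto).
      assert (b <= s) by (apply Hb; [apply Hs | lra]). lra. }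
    destruct (Hd c F3 (e / 2)) as [delta [hdel Hdel]]; [lra|].
    assert (hia : / a > 0) by (apply Rinv_0_lt_compat; lra).
    destruct (F2 (Rmin delta (/ a))) as [s [Hs Hlt]].
    { apply Rmin_pos; lra. }
    assert (hcs : c < s) by (apply Gt; auto).
    assert (hmd := Rmin_l delta (/ a)). assert (hma := Rmin_r delta (/ a)).
    specialize (Hdel s (proj1 Hs)). rewrite Hsig in Hdel.
    assert (Rabs (s - c) < delta) by (rewrite Rabs_right; lra).
    specialize (Hdel H). rewrite (Rabs_left (c - s)) in Hdel by lra.
    apply Rabs_split in Hdel. destruct Hdel as [Hl Hr].
    rewrite He in Hl, Hr by auto.
    set (h := s - c) in *.
    assert (hah : a * h < 1).
    { assert (h < / a) by (unfold h; lra).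
      apply (Rmult_lt_compat_l a) in H1; [|lra]. rewrite Rinv_r in H1; lra. }
    assert (p1 : g c * (1 - a * h) >= 0) by (apply Rle_ge, Rmult_le_pos; lra).
    assert (p2 : e * (1 + c) * a * h >= 0).
    { apply Rle_ge. repeat apply Rmult_le_pos; unfold h; lra. }
    assert (p3 : a * v c * h >= 0).
    { apply Rle_ge. specialize (Hv c F3). repeat apply Rmult_le_pos; unfold h; lra. }
    destruct Hs as [_ [_ Hgs]]. unfold g in *.
    assert (Hws : w s >= w c + a * (v c - w c) * h - e / 2 * h).
    { replace (c - s) with (- h) in Hr by (unfold h; lra).
      replace (- - h) with h in Hr by ring. nra. }
    assert (s = c + h) by (unfold h; lra). idtac.
    nra.
  -
    assert (hc : 0 < c).
    { destruct (Req_dec c 0) as [E0|]; [|lra].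
      rewrite E0 in Hgc. unfold g in Hgc. rewrite H0 in Hgc. lra. }
    set (L := fun r => T r /\ r < c).
    destruct (completeness L) as [rho [Lub Llub]].
    { exists c. intros r [_ hr]. lra. }
    { exists 0. split; auto. }
    assert (Hrc : rho <= c).
    { apply Llub. intros r [_ hr]; lra. }
    assert (Hr0 : 0 <= rho) by (apply Lub; split; auto).
    assert (G2 : forall r, r > 0 -> exists s, L s /\ s > rho - r).
    { intros r hr. apply NNPP. intros Hn.
      assert (rho <= rho - r).
      { apply Llub. intros y Hy. destruct (Rle_or_lt y (rho - r)); auto.
        exfalso; apply Hn. exists y. split; auto. }
      lra. }
    assert (Trho : T rho).
    { apply Hcl. intros eps heps. destruct (G2 eps heps) as [s [Hs Hlt]].
      exists s. split. apply Hs. assert (s <= rho) by (apply Lub; auto).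
      rewrite Rabs_left1; lra. }
    destruct (Rle_or_lt c rho) as [Heq | Hlt].
    + (* left-dense *)
      assert (rho = c) by lra. clear Heq.
      set (P := Defs.sigma T c). set (M := Rabs (P - c)). set (D := ud c).
      set (gam := - g c).
      assert (hM : 0 <= M) by apply Rabs_pos.
      assert (hD : 0 <= Rabs D) by apply Rabs_pos.
      set (eps := gam / (4 * (M + 1))).
      assert (heps : eps > 0) by (unfold eps, gam; apply Rdiv_lt_0_compat; lra).
      destruct (Hd c F3 eps heps) as [delta [hdel Hdel]].
      set (r := Rmin delta (Rmin 1 (gam / (2 * (Rabs D + 1))))).
      assert (hr2 : gam / (2 * (Rabs D + 1)) > 0) by (unfold gam; apply Rdiv_lt_0_compat; lra).
      assert (hr : r > 0) by (unfold r; repeat apply Rmin_pos; lra).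
      destruct (G2 r hr) as [s [[Ts hsc] hsr]].
      rewrite H in hsr.
      assert (hr_d : r <= delta) by apply Rmin_l.
      assert (hr_1 : r <= 1) by (eapply Rle_trans; [apply Rmin_r| apply Rmin_l]).
      assert (hr_g : r <= gam / (2 * (Rabs D + 1))) by (eapply Rle_trans; [apply Rmin_r| apply Rmin_r]).
      assert (I1 := Hdel s Ts). assert (I2 := Hdel c F3).
      fold P in I1, I2. fold D in I1, I2.
      rewrite Rminus_diag, Rabs_R0 in I2.
      specialize (I2 hdel). fold M in I2.
      assert (Rabs (s - c) < delta) by (rewrite Rabs_left; lra).
      specialize (I1 H1).
      assert (tri : Rabs (P - s) <= M + (c - s)).
      { unfold M. unfold Rabs; destruct (Rcase_abs (P - s)); destruct (Rcase_abs (P - c)); lra. }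
      assert (I1' : Rabs (w P - w s - D * (P - s)) <= eps * (M + (c - s))).
      { eapply Rle_trans; [exact I1|]. apply Rmult_le_compat_l; lra. }
      apply Rabs_split in I1'. apply Rabs_split in I2.
      assert (hDs : - D * (c - s) <= Rabs D * r).
      { assert (- D <= Rabs D) by (rewrite <- Rabs_Ropp; apply Rle_abs).
        assert (- D * (c - s) <= Rabs D * (c - s)) by (apply Rmult_le_compat_r; lra).
        assert (Rabs D * (c - s) <= Rabs D * r) by (apply Rmult_le_compat_l; lra).
        lra. }
      assert (hDr : Rabs D * r < gam / 2).
      { assert (Rabs D * r <= Rabs D * (gam / (2 * (Rabs D + 1)))) by (apply Rmult_le_compat_l; lra).
        assert (Rabs D * (gam / (2 * (Rabs D + 1))) < gam / 2).
        { unfold Rdiv. rewrite Rinv_mult.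
          assert (Rabs D * / (Rabs D + 1) < 1).
          { apply (Rmult_lt_reg_r (Rabs D + 1)); [lra|]. rewrite Rmult_assoc, Rinv_l; lra. }
          assert (/ (Rabs D + 1) > 0) by (apply Rinv_0_lt_compat; lra).
          unfold gam. nra. }
        lra. }
      assert (hem : eps * (M + (c - s)) + eps * M < gam / 2).
      { assert (eps * (M + (c - s)) + eps * M <= eps * (2 * M + 1)).
        { assert (eps * (c - s) <= eps * 1) by (apply Rmult_le_compat_l; lra). nra. }
        assert (eps * (2 * M + 1) < gam / 2).
        { unfold eps. unfold Rdiv. rewrite Rinv_mult.
          assert (/ (M + 1) * (2 * M + 1) < 2).
          { apply (Rmult_lt_reg_l (M + 1)); [lra|].
            rewrite <- Rmult_assoc, Rinv_r; lra. }
          assert (/ (M + 1) > 0) by (apply Rinv_0_lt_compat; lra).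
          unfold gam. nra. }
        lra. }
      assert (g s >= 0) by (apply F5; auto).
      assert (g c = w c + e * (1 + c)) by reflexivity. unfold g in H2. assert (gam = - g c) by reflexivity. clear Hdel; clearbody r eps gam D M P. assert (e * s < e * c) by (apply Rmult_lt_compat_l; lra). lra.
    + (* left-scattered *)
      assert (Hsig : Defs.sigma T rho = c).
      { apply sigma_eq. split.
        - intros r Tr hr. destruct (Rle_or_lt c r); auto.
          assert (r <= rho) by (apply Lub; split; auto). lra.
        - intros b Hb. apply Hb; auto. }
      assert (Hgr : g rho >= 0) by (apply F5; auto).
      assert (Hx : w c - w rho - ud rho * (c - rho) = 0).
      { apply (zero_of_small _ (Rabs (c - rho))); [apply Rabs_pos|].
        intros eps heps. destruct (Hd rho Trho eps heps) as [delta [hdel Hdel]].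
        specialize (Hdel rho Trho). rewrite Hsig in Hdel. apply Hdel.
        rewrite Rminus_diag, Rabs_R0; lra. }
      assert (Hts := TS rho Trho). unfold graininess in Hts. rewrite Hsig in Hts.
      rewrite He in Hx by auto.
      assert (Hvr := Hv rho Trho).
      set (mu := c - rho) in *.
      assert (p1 : g rho * (1 - a * mu) >= 0) by (apply Rle_ge, Rmult_le_pos; lra).
      assert (p2 : e * (1 + rho) * a * mu >= 0).
      { apply Rle_ge. repeat apply Rmult_le_pos; unfold mu; lra. }
      assert (p3 : a * v rho * mu >= 0).
      { apply Rle_ge. repeat apply Rmult_le_pos; unfold mu; lra. }
      assert (c = rho + mu) by (unfold mu; lra).
      assert (g rho = w rho + e * (1 + rho)) by reflexivity.
      assert (g c = w c + e * (1 + c)) by reflexivity.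
      assert (w c = w rho + a * (v rho - w rho) * mu) by lra.
      assert (e * (1 + c) = e * (1 + rho) + e * mu) by (rewrite H; ring).
      assert (e * mu > 0) by (apply Rmult_lt_0_compat; unfold mu; lra).
      nra.
Qed.
End Key.

Theorem mainTheorem8 (T : R -> Prop) (A k mux : R) (u : Z -> R -> R) (n : Z) :
  is_time_scale0 T -> A > 0 -> k > 0 -> mux > 0 ->
  TS1 T k mux ->
  is_solution_P T A k mux u ->
  (1 <= n)%Z ->
  (forall t, T t -> u (n - 1)%Z t >= 0) ->
  (exists t, T t /\ u (n - 1)%Z t > 0) ->
  forall t, T t -> u n t >= 0.
Proof.
  intros HT HA hk hmux HTS [[ud Hud] [_ [Hn0 _]]] hn Hv _ t Ht.
  assert (Hk := key T (k / mux) (u n) (u (n - 1)%Z) (ud n) HT).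
  assert (ha : k / mux > 0) by (apply Rdiv_lt_0_compat; lra).
  assert (Hw0 : u n 0 = 0) by (apply Hn0; lia).
  assert (K : forall e, e > 0 -> u n t + e * (1 + t) >= 0).
  { intros e he. apply Hk; auto.
    - intros s Ts. specialize (HTS s Ts). unfold Rdiv in *. lra.
    - intros s Ts. apply (proj1 (Hud n s Ts)).
    - intros s Ts. destruct (Hud n s Ts) as [_ Heq]. unfold Rdiv in *. lra. }
  destruct HT as [_ [_ [Hpos _]]]. assert (0 <= t) by auto.
  destruct (Rle_or_lt 0 (u n t)); [lra|].
  specialize (K (- u n t / (2 * (1 + t)))).
  assert (- u n t / (2 * (1 + t)) > 0) by (apply Rdiv_lt_0_compat; lra).
  specialize (K H1).
  replace (- u n t / (2 * (1 + t)) * (1 + t)) with (- u n t / 2) in K by (field; lra).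
  lra.
Qed.
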